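(* Let $K$ be a commutative field and $L$ a (possibly noncommutative) division ring containing $K$ in its center such that every element of $L\setminus K$ is transcendental over $K$. Let $A,B$ be nonzero finite-dimensional $K$-subspaces of $L$. Then $\dim_K\langle AB\rangle\geq\dim_KA+\dim_KB-1$.
   Context: For $S\subset L$, $\langle S\rangle$ denotes the $K$-subspace of $L$ spanned by $S$; $AB=\{ab\mid a\in A,b\in B\}$. *)

(* Defs.v *)
From HB Require Import structures.
From mathcomp Require Import all_boot all_order all_algebra.
Set Implicit Arguments. Unset Strict Implicit. Unset Printing Implicit Defensive.
Import GRing.Theory.
Local Open Scope ring_scope.

(* K : fieldType, L : unitAlgType K.  Being an algebra (scaling associates on
   both sides) means the image k%:A of K lies in the center of L. *)

Section LinAlg.
Variables (K : fieldType) (L : unitAlgType K).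

Definition division_ring : Prop := forall x : L, x != 0 -> x \is a GRing.unit.

Definition algebraic_over (x : L) : Prop :=
  exists p : {poly K}, p != 0 /\ horner_alg x p = 0.

Definition in_K (x : L) : Prop := exists k : K, x = k%:A.

Definition kspan (S : L -> Prop) (v : L) : Prop :=
  exists (s : seq L) (c : seq K),
    (forall x, x \in s -> S x) /\ v = \sum_(i < size s) c`_i *: s`_i.

Definition ksubspace (S : L -> Prop) : Prop :=
  S 0 /\ forall (a : K) (x y : L), S x -> S y -> S (a *: x + y).

Definition kfree (s : seq L) : Prop :=
  forall c : 'I_(size s) -> K,
    \sum_(i < size s) c i *: s`_i = 0 -> forall i, c i = 0.

Definition kbasis_of (S : L -> Prop) (s : seq L) : Prop :=
  kfree s /\ forall v, S v <-> kspan (fun x => x \in s) v.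

Definition has_kdim (S : L -> Prop) (n : nat) : Prop :=
  exists s : seq L, size s = n /\ kbasis_of S s.

Definition prodset (A B : L -> Prop) (z : L) : Prop :=
  exists x y, A x /\ B y /\ z = x * y.

End LinAlg.

(* Main.v *)
Require Import Defs.
From HB Require Import structures.
From mathcomp Require Import all_boot all_order all_algebra.
From Stdlib Require Import Classical ClassicalEpsilon Lia.
Import GRing.Theory.
Local Open Scope ring_scope.

Module Helpers.
Set Implicit Arguments. Unset Strict Implicit. Unset Printing Implicit Defensive.

Section Lin.
Variables (K : fieldType) (L : unitAlgType K).
Implicit Types (S U V : L -> Prop) (s t w u : seq L) (c : nat -> K).

Definition lcf c s : L := \sum_(i < size s) c i *: s`_i.

Lemma lcf_nil c : lcf c [::] = 0.
Proof. by rewrite /lcf big_ord0. Qed.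

Lemma lcf_cons c x s : lcf c (x :: s) = c 0%N *: x + lcf (fun i => c i.+1) s.
Proof. by rewrite /lcf /= big_ord_recl. Qed.

Lemma lcf_eq c1 c2 s : (forall i, (i < size s)%N -> c1 i = c2 i) -> lcf c1 s = lcf c2 s.
Proof. by move=> H; apply: eq_bigr => i _; rewrite H. Qed.

Lemma lcf_cat c s1 s2 :
  lcf c (s1 ++ s2) = lcf c s1 + lcf (fun i => c (size s1 + i)%N) s2.
Proof.
elim: s1 c => [|x s1 IH] c /=; first by rewrite lcf_nil add0r.
by rewrite !lcf_cons IH addrA.
Qed.

Lemma lcf_add c1 c2 s : lcf (fun i => c1 i + c2 i) s = lcf c1 s + lcf c2 s.
Proof. by rewrite /lcf -big_split; apply: eq_bigr => i _; rewrite scalerDl. Qed.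

Lemma lcf_scale k c s : lcf (fun i => k * c i) s = k *: lcf c s.
Proof. by rewrite /lcf scaler_sumr; apply: eq_bigr => i _; rewrite scalerA. Qed.

Lemma lcf0 s : lcf (fun _ => 0) s = 0.
Proof. by rewrite /lcf big1 // => i _; rewrite scale0r. Qed.

Definition islin (f : L -> L) := forall a x y, f (a *: x + y) = a *: f x + f y.

Lemma islin0 f : islin f -> f 0 = 0.
Proof.
move=> H; have := H (-1) 0 0; rewrite scaler0 addr0 scaleN1r addNr //.
Qed.

Lemma islinD f : islin f -> forall x y, f (x + y) = f x + f y.
Proof. by move=> H x y; have := H 1 x y; rewrite !scale1r. Qed.

Lemma islinZ f : islin f -> forall a x, f (a *: x) = a *: f x.
Proof. by move=> H a x; rewrite -[a *: x]addr0 H islin0 // addr0. Qed.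

Lemma lcf_map f c s : islin f -> lcf c (map f s) = f (lcf c s).
Proof.
move=> H; elim: s c => [|x s IH] c /=; first by rewrite !lcf_nil islin0.
by rewrite !lcf_cons IH H.
Qed.

Lemma islin_l (a : L) : islin (fun z => a * z).
Proof. by move=> k x y; rewrite mulrDr scalerAr. Qed.
Lemma islin_r (a : L) : islin (fun z => z * a).
Proof. by move=> k x y; rewrite mulrDl scalerAl. Qed.

Lemma lcf_nth s j : (j < size s)%N -> lcf (fun i => (i == j)%:R) s = s`_j.
Proof.
elim: s j => [|x s IH] [|j] //= Hj; rewrite lcf_cons /=.
  by rewrite scale1r (lcf_eq (c2 := fun _ => 0)) ?lcf0 ?addr0.
by rewrite scale0r add0r -IH.
Qed.

Definition spanf s v := exists c, v = lcf c s.

Definition ofo n (f : 'I_n -> K) : nat -> K :=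
  fun i => if insub i is Some j then f j else 0.
Lemma ofoE n (f : 'I_n -> K) (j : 'I_n) : ofo f j = f j.
Proof. by rewrite /ofo valK. Qed.

Definition freef s := forall c, lcf c s = 0 -> forall i, (i < size s)%N -> c i = 0.
Definition basisf S s := freef s /\ forall v, S v <-> spanf s v.
Definition hasd S n := exists s, size s = n /\ basisf S s.

Lemma ksub0 S : ksubspace S -> S 0. Proof. by case. Qed.
Lemma ksubD S : ksubspace S -> forall x y, S x -> S y -> S (x + y).
Proof. by move=> [_ H] x y Hx Hy; have := H 1 x y Hx Hy; rewrite scale1r. Qed.
Lemma ksubZ S : ksubspace S -> forall a x, S x -> S (a *: x).
Proof. by move=> [H0 H] a x Hx; rewrite -[a *: x]addr0; apply: H. Qed.

Lemma sub_lcf S c s : ksubspace S -> (forall x, x \in s -> S x) -> S (lcf c s).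
Proof.
move=> HS; elim: s c => [|x s IH] c Hs; first by rewrite lcf_nil; apply: ksub0.
rewrite lcf_cons; apply: (proj2 HS); first by apply: Hs; rewrite inE eqxx.
by apply: IH => y Hy; apply: Hs; rewrite inE Hy orbT.
Qed.

Lemma spanf_ksub s : ksubspace (spanf s).
Proof.
split; first by exists (fun _ => 0); rewrite lcf0.
move=> a x y [c1 ->] [c2 ->]; exists (fun i => a * c1 i + c2 i).
by rewrite lcf_add lcf_scale.
Qed.

Lemma spanf_mem s x : x \in s -> spanf s x.
Proof.
move=> Hx; exists (fun i => (i == index x s)%:R).
by rewrite lcf_nth ?index_mem // nth_index.
Qed.

Lemma spanf_sub s t v : (forall x, x \in s -> spanf t x) -> spanf s v -> spanf t v.
Proof. by move=> H [c ->]; apply: sub_lcf => //; apply: spanf_ksub. Qed.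

Lemma kspanE P v : kspan P v <-> exists s c, (forall x, x \in s -> P x) /\ v = lcf c s.
Proof.
split.
  by move=> [s [c [H ->]]]; exists s, (nth 0 c).
move=> [s [c [H ->]]]; exists s, (mkseq c (size s)); split => //.
by apply: eq_bigr => i _; rewrite nth_mkseq.
Qed.

Lemma kspan_spanf s v : kspan (fun x => x \in s) v <-> spanf s v.
Proof.
rewrite kspanE; split.
  by move=> [s' [c [H ->]]]; apply: (spanf_sub (s := s')) => [x /H|];
    [apply: spanf_mem | exists c].
by move=> [c ->]; exists s, c.
Qed.

Lemma kfree_freef s : kfree s <-> freef s.
Proof.
split.
  move=> H c Hc i Hi; exact: (H (fun j : 'I_(size s) => c j) Hc (Ordinal Hi)).
move=> H c Hc i; rewrite -ofoE; apply: H (ltn_ord i).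
by rewrite -Hc; apply: eq_bigr => j _; rewrite ofoE.
Qed.

Lemma hasdE S n : has_kdim S n <-> hasd S n.
Proof.
split; move=> [s [Hs [Hf Hb]]]; exists s; split => //; split.
- by apply/kfree_freef.
- by move=> v; rewrite Hb kspan_spanf.
- by apply/kfree_freef.
- by move=> v; rewrite Hb kspan_spanf.
Qed.

End Lin.

Section Lin2.
Variables (K : fieldType) (L : unitAlgType K).
Implicit Types (S U V : L -> Prop) (s t w u : seq L) (c : nat -> K).

Lemma free_rcons s v : freef s -> ~ spanf s v -> freef (rcons s v).
Proof.
move=> Hf Hn c Hc.
rewrite -cats1 lcf_cat lcf_cons lcf_nil addr0 addn0 in Hc.
have Hcn : c (size s) = 0.
  apply/eqP; apply/negP => /negP Hnz; apply: Hn.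
  exists (fun i => - (c (size s))^-1 * c i); rewrite lcf_scale.
  have -> : lcf c s = - (c (size s) *: v).
    by apply/eqP; rewrite -addr_eq0 Hc.
  by rewrite scaleNr scalerN opprK scalerA mulVf // scale1r.
rewrite Hcn scale0r addr0 in Hc.
move=> i; rewrite size_rcons ltnS leq_eqVlt => /orP [/eqP ->|Hi] //.
exact: Hf Hc i Hi.
Qed.

Lemma steinitz s t : freef s -> (forall x, x \in s -> spanf t x) -> (size s <= size t)%N.
Proof.
move=> Hf Hs; rewrite leqNgt; apply/negP => Hlt.
have H : forall i : 'I_(size s), exists c, s`_i = lcf c t.
  by move=> i; apply: Hs; apply: mem_nth.
pose C i := proj1_sig (constructive_indefinite_description _ (H i)).
have HC (i : 'I_(size s)) : s`_i = lcf (C i) t := proj2_sig (constructive_indefinite_description _ (H i)).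
pose M := \matrix_(i < size s, j < size t) C i j.
have Hnf : ~~ row_free M.
  rewrite /row_free; apply/negP => /eqP Hr.
  have := rank_leq_col M; rewrite Hr => Hle.
  by move: (leq_trans Hlt Hle); rewrite ltnn.
have : kermx M != 0 by rewrite kermx_eq0.
move=> /rowV0Pn [v /sub_kermxP Hv Hv0].
have Hz : lcf (ofo (fun i => v 0 i)) s = 0.
  rewrite /lcf.
  under eq_bigr => i _ do rewrite ofoE HC /lcf scaler_sumr.
  rewrite exchange_big /= big1 // => j _.
  have : (v *m M) 0 j = 0 by rewrite Hv mxE.
  rewrite mxE => Hj.
  rewrite -[RHS](scale0r (t`_j)) -Hj scaler_suml.
  by apply: eq_bigr => i _; rewrite mxE scalerA.
apply/negP: Hv0; rewrite negbK; apply/eqP/rowP => i.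
by rewrite mxE; have := Hf _ Hz i (ltn_ord i); rewrite ofoE.
Qed.

Lemma max_exists (P : nat -> Prop) B : P 0%N -> (forall k, P k -> (k <= B)%N) ->
  exists k, P k /\ ~ P k.+1.
Proof.
move=> H0 HB; apply: NNPP => Hn.
have Hall : forall k, P k by elim=> // k IH; apply: NNPP => Hk; apply: Hn; exists k.
by have := HB B.+1 (Hall _); rewrite ltnn.
Qed.

Lemma extend S t w : ksubspace S -> (forall v, S v -> spanf t v) -> freef w ->
  (forall x, x \in w -> S x) ->
  exists u, (forall x, x \in u -> S x) /\ basisf S (w ++ u).
Proof.
move=> HS Ht Hw HwS.
pose P k := exists u, size u = k /\ (forall x, x \in u -> S x) /\ freef (w ++ u).
have [k [[u [Hsz [HuS Hf]]] Hn]] : exists k, P k /\ ~ P k.+1.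
  apply: (@max_exists P (size t)).
    by exists [::]; rewrite cats0.
  move=> k [u [<- [HuS Hf]]]; apply: leq_trans (steinitz Hf _).
    by rewrite size_cat leq_addl.
  move=> x; rewrite mem_cat => /orP [/HwS|/HuS]; exact: Ht.
have HwuS : forall x, x \in w ++ u -> S x.
  by move=> x; rewrite mem_cat => /orP [/HwS|/HuS].
exists u; split => //; split => // v; split.
  move=> Hv; apply: NNPP => Hnv; apply: Hn; exists (rcons u v); split.
    by rewrite size_rcons Hsz.
  split; last by rewrite -rcons_cat; apply: free_rcons.
  by move=> x; rewrite mem_rcons inE => /orP [/eqP ->|/HuS].
by move=> [c ->]; apply: sub_lcf.
Qed.

Lemma basis_exists S t : ksubspace S -> (forall v, S v -> spanf t v) ->
  exists u, basisf S u /\ (size u <= size t)%N.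
Proof.
move=> HS Ht.
have [|//|u [HuS Hb]] := @extend S t [::] HS Ht.
  by move=> c _ i.
exists u; split => //; apply: steinitz; first exact: (proj1 Hb).
by move=> x /HuS; apply: Ht.
Qed.

Lemma basisf_mem S s x : basisf S s -> x \in s -> S x.
Proof. by move=> [_ H] Hx; apply/H/spanf_mem. Qed.

Lemma basis_uniq S s1 s2 : basisf S s1 -> basisf S s2 -> size s1 = size s2.
Proof.
move=> H1 H2; apply/eqP; rewrite eqn_leq; apply/andP; split.
  by apply: steinitz (proj1 H1) _ => x /(basisf_mem H1) /(proj2 H2).
by apply: steinitz (proj1 H2) _ => x /(basisf_mem H2) /(proj2 H1).
Qed.

Lemma hasd_uniq S a b : hasd S a -> hasd S b -> a = b.
Proof. by move=> [s1 [<- H1]] [s2 [<- H2]]; apply: basis_uniq H1 H2. Qed.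

Lemma hasd_sub U S d : ksubspace U -> hasd S d -> (forall v, U v -> S v) ->
  exists e, hasd U e /\ (e <= d)%N.
Proof.
move=> HU [s [<- Hs]] HUS.
have [|u [Hu Hsz]] := @basis_exists U s HU.
  by move=> v /HUS /(proj2 Hs).
by exists (size u); split => //; exists u.
Qed.

Lemma hasd_le U S e d : ksubspace U -> hasd U e -> hasd S d ->
  (forall v, U v -> S v) -> (e <= d)%N.
Proof.
move=> HU He Hd HUS; have [e' [He' Hle]] := hasd_sub HU Hd HUS.
by rewrite (hasd_uniq He He').
Qed.

Lemma hasd_eq U S d : ksubspace S -> hasd U d -> hasd S d ->
  (forall v, U v -> S v) -> forall v, S v -> U v.
Proof.
move=> HS [w [Hw Hbw]] [t [Ht Hbt]] HUS.
have [||u [HuS Hb]] := @extend S t w HS _ (proj1 Hbw).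
- by move=> v /(proj2 Hbt).
- by move=> x /(basisf_mem Hbw) /HUS.
have Hu : u = [::].
  have := basis_uniq Hb Hbt; rewrite size_cat Hw Ht.
  by case: u {HuS Hb} => //= a u /eqP; rewrite -{2}[d]addn0 eqn_add2l.
move: Hb; rewrite Hu cats0 => Hb v /(proj2 Hb) /(proj2 Hbw); done.
Qed.

Lemma hasd_pos S d x : hasd S d -> S x -> x != 0 -> (0 < d)%N.
Proof.
move=> [s [<- [_ Hb]]] /Hb [c ->]; case: s {Hb} => //=.
by rewrite lcf_nil eqxx.
Qed.

Lemma hasd_nz S d : hasd S d -> (0 < d)%N -> exists x, S x /\ x != 0.
Proof.
move=> [s [Hs Hb]] Hd; exists s`_0; split.
  by apply: (basisf_mem Hb); apply: mem_nth; rewrite Hs.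
apply/negP => /eqP H0.
have Hs0 : (0 < size s)%N by rewrite Hs.
have := (proj1 Hb) (fun i => (i == 0%N)%:R).
rewrite lcf_nth // H0 => /(_ erefl 0%N Hs0) /eqP; rewrite oner_eq0 //.
Qed.

End Lin2.

Section Lin3.
Variables (K : fieldType) (L : unitAlgType K).
Implicit Types (S U V : L -> Prop) (s t w u : seq L) (c : nat -> K).

Definition capS U V := fun z : L => U z /\ V z.
Definition plusS U V := fun z : L => exists x y, U x /\ V y /\ z = x + y.

Lemma ksub_cap U V : ksubspace U -> ksubspace V -> ksubspace (capS U V).
Proof.
move=> [HU0 HU] [HV0 HV]; split => // a x y [Hx1 Hx2] [Hy1 Hy2]; split; auto.
Qed.

Lemma ksub_plus U V : ksubspace U -> ksubspace V -> ksubspace (plusS U V).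
Proof.
move=> HU HV; split; first by exists 0, 0; rewrite addr0; split; [apply: ksub0|split; [apply: ksub0|]].
move=> a _ _ [x1 [y1 [Hx1 [Hy1 ->]]]] [x2 [y2 [Hx2 [Hy2 ->]]]].
exists (a *: x1 + x2), (a *: y1 + y2); split; first by apply: (proj2 HU).
split; first by apply: (proj2 HV).
by rewrite scalerDr addrACA.
Qed.

Lemma ksub_pre S (g : L -> L) : islin g -> ksubspace S -> ksubspace (fun z => S (g z)).
Proof.
move=> Hg [H0 H]; split; first by rewrite islin0.
by move=> a x y Hx Hy; rewrite Hg; apply: H.
Qed.

Lemma lcf_catfree w u c : freef (w ++ u) -> lcf c (w ++ u) = 0 ->
  (forall i, (i < size w)%N -> c i = 0) /\ (forall i, (i < size u)%N -> c (size w + i)%N = 0).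
Proof.
move=> Hf Hc; split => i Hi; apply: (Hf _ Hc); rewrite size_cat.
  exact: ltn_addr. by rewrite ltn_add2l.
Qed.

Lemma modular U V p q : ksubspace U -> ksubspace V -> hasd U p -> hasd V q ->
  exists r e, hasd (capS U V) r /\ hasd (plusS U V) e /\ (r + e = p + q)%N.
Proof.
move=> HU HV [tu [Htu Hbu]] [tv [Htv Hbv]].
have HI := ksub_cap HU HV.
have [w [Hbw _]] := @basis_exists _ _ (capS U V) tu HI (fun v Hv => proj1 (proj2 Hbu v) (proj1 Hv)).
have HwU : forall x, x \in w -> U x by move=> x /(basisf_mem Hbw) [].
have HwV : forall x, x \in w -> V x by move=> x /(basisf_mem Hbw) [].
have [u [HuU Hwu]] := @extend _ _ U tu w HU (fun v => proj1 (proj2 Hbu v)) (proj1 Hbw) HwU.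
have [v [HvV Hwv]] := @extend _ _ V tv w HV (fun v => proj1 (proj2 Hbv v)) (proj1 Hbw) HwV.
have Hp : size (w ++ u) = p by rewrite -Htu; apply: basis_uniq Hwu Hbu.
have Hq : size (w ++ v) = q by rewrite -Htv; apply: basis_uniq Hwv Hbv.
exists (size w), (size (w ++ u ++ v)); split; first by exists w.
split; last by rewrite -Hp -Hq !size_cat addnA addnACA.
exists (w ++ u ++ v); split => //; split.
- move=> c; rewrite catA lcf_cat => Hc.
  set X := lcf c (w ++ u) in Hc; set Y := lcf _ v in Hc.
  have HX : U X by rewrite /X; apply: sub_lcf => // x; rewrite mem_cat => /orP [/HwU|/HuU].
  have HY : V Y by rewrite /Y; apply: sub_lcf.
  have HYU : U Y.
    have -> : Y = (-1) *: X by apply/eqP; rewrite scaleN1r -addr_eq0 addrC Hc.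
    by apply: ksubZ.
  have [d Hd] : spanf w Y by apply/(proj2 Hbw).
  have Hz : lcf (fun i => if (i < size w)%N then - d i else c (size (w ++ u) + (i - size w))%N) (w ++ v) = 0.
    rewrite lcf_cat (lcf_eq (c2 := fun i => -1 * d i)); last by move=> i ->; rewrite mulN1r.
    rewrite lcf_scale -Hd (lcf_eq (c2 := fun i => c (size (w ++ u) + i)%N)).
      by rewrite scaleN1r addNr.
    by move=> i _; rewrite ltnNge leq_addr /= addKn.
  have [_ Hcv] := lcf_catfree (proj1 Hwv) Hz.
  have HY0 : Y = 0.
    rewrite /Y (lcf_eq (c2 := fun _ => 0)) ?lcf0 // => i Hi.
    by have := Hcv i Hi; rewrite ltnNge leq_addr /= addKn.
  rewrite HY0 addr0 in Hc.
  move=> i; rewrite !size_cat => Hi.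
  case: (ltnP i (size w + size u)) => Hi2.
    by apply: (proj1 Hwu _ Hc); rewrite size_cat.
  have H := Hcv (i - (size w + size u))%N.
  rewrite (ltnNge _ (size w)) leq_addr /= addKn size_cat subnKC // in H.
  by apply: H; rewrite ltn_subLR // addnA.
- move=> z; split.
    move=> [x [y [Hx [Hy ->]]]]; apply: (ksubD (spanf_ksub _)).
      apply: (spanf_sub (s := w ++ u)); last by apply/(proj2 Hwu).
      by move=> a Ha; apply: spanf_mem; rewrite catA mem_cat Ha.
    apply: (spanf_sub (s := w ++ v)); last by apply/(proj2 Hwv).
    move=> a; rewrite !mem_cat => /orP [Ha|Ha]; apply: spanf_mem; rewrite !mem_cat Ha ?orbT //.
  move=> [c ->]; rewrite catA lcf_cat.
  exists (lcf c (w ++ u)), (lcf (fun i => c (size (w ++ u) + i)%N) v); split.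
    by apply: sub_lcf => // x; rewrite mem_cat => /orP [/HwU|/HuU].
  by split => //; apply: sub_lcf.
Qed.

Lemma hasd_iso S d (f g : L -> L) : islin f -> cancel f g -> cancel g f ->
  hasd S d -> hasd (fun y => S (g y)) d.
Proof.
move=> Hf Hfg Hgf [s [<- [Hfr Hb]]]; exists (map f s); rewrite size_map; split => //; split.
  move=> c; rewrite lcf_map // => H0 i; rewrite size_map; apply: Hfr.
  by rewrite -[lcf c s]Hfg H0 -{1}(islin0 Hf) Hfg.
move=> y; split.
  move=> /Hb [c Hc]; exists c; rewrite lcf_map // -Hc Hgf //.
by move=> [c]; rewrite lcf_map // => ->; rewrite Hfg; apply/Hb; exists c.
Qed.

Lemma spanf_mul s1 s2 x y : spanf s1 x -> spanf s2 y ->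
  spanf [seq a * b | a <- s1, b <- s2] (x * y).
Proof.
move=> [c1 ->] [c2 ->].
rewrite -(lcf_map c1 s1 (islin_r (lcf c2 s2))).
apply: sub_lcf; first exact: spanf_ksub.
move=> z /mapP [a Ha ->]; rewrite -lcf_map; last exact: islin_l.
apply: sub_lcf; first exact: spanf_ksub.
move=> zz /mapP [b Hb ->]; apply: spanf_mem.
by apply/allpairsP; exists (a, b).
Qed.

End Lin3.

Section Lin4.
Variables (K : fieldType) (L : unitAlgType K).
Implicit Types (S U V : L -> Prop) (s t w u : seq L) (c : nat -> K).

Lemma alg_stab S d (f : L -> L) : ksubspace S -> hasd S d -> (0 < d)%N ->
  (forall z, S z -> S (f z)) ->
  exists s0 : L, S s0 /\ s0 != 0 /\ exists c : nat -> K,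
    (exists i, (i <= d)%N /\ c i != 0) /\ \sum_(i < d.+1) c i *: iter i f s0 = 0.
Proof.
move=> HS Hd Hd0 Hf.
have [s0 [Hs0 Hnz]] := hasd_nz Hd Hd0.
exists s0; split => //; split => //.
pose T := mkseq (fun i => iter i f s0) d.+1.
have HT : forall x, x \in T -> S x.
  move=> x /mapP [i _ ->]; elim: i => //= i IH; exact: Hf.
have [b [Hb Hbb]] := Hd.
have Hnf : ~ freef T.
  move=> HfT; have := steinitz HfT (fun x Hx => proj1 (proj2 Hbb x) (HT x Hx)).
  by rewrite size_mkseq Hb ltnn.
have [c [Hc [i [Hi Hci]]]] : exists c, lcf c T = 0 /\ exists i, (i < size T)%N /\ c i != 0.
  apply: NNPP => Hn; apply: Hnf => c Hc i Hi; apply: NNPP => Hci; apply: Hn.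
  by exists c; split => //; exists i; split => //; apply/eqP.
exists c; split.
  by exists i; split => //; move: Hi; rewrite size_mkseq ltnS.
rewrite -[RHS]Hc /lcf -(big_mkord xpredT (fun i => c i *: T`_i)) size_mkseq big_mkord.
by apply: eq_bigr => j _; rewrite nth_mkseq.
Qed.

Lemma horner_alg_sum (x : L) n c :
  horner_alg x (\sum_(i < n) c i *: 'X^i) = \sum_(i < n) c i *: x ^+ i.
Proof.
rewrite raddf_sum; apply: eq_bigr => i _.
rewrite -mul_polyC; change (horner_alg x ((c i)%:P * 'X^i) = c i *: x ^+ i).
by rewrite rmorphM /= horner_algC rmorphXn /= horner_algX mulr_algl.
Qed.

Lemma poly_nz n c i : (i < n)%N -> c i != 0 -> \sum_(j < n) c j *: 'X^j != 0 :> {poly K}.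
Proof.
move=> Hi Hc; apply/negP => /eqP H0.
have : (\sum_(j < n) c j *: 'X^j : {poly K})`_i = 0 by rewrite H0 coef0.
rewrite coef_sum (bigD1 (Ordinal Hi)) //= coefZ coefXn eqxx mulr1 big1 ?addr0.
  by move/eqP; rewrite (negbTE Hc).
move=> j Hj; rewrite coefZ coefXn.
have -> : (i == j) = false by apply/eqP => Heq; move/eqP: Hj; apply; apply: val_inj.
by rewrite mulr0.
Qed.
End Lin4.

Lemma meas_lt c t t' n n' N : (t <= c.*2)%N -> (t < t')%N -> (n' <= c)%N ->
  ((c.*2.+1 - t) * c.+1 + n <= N.+1)%N -> (0 < n)%N ->
  ((c.*2.+1 - t') * c.+1 + n' <= N)%N.
Proof.
move=> h1 h2 h3 h4 h5.
have h6 : ((c.*2.+1 - t').+1 <= c.*2.+1 - t)%N.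
  apply/leP; move/leP: h1; move/leP: h2; rewrite -!addnn -?minusE -?plusE; lia.
have h7 := leq_mul h6 (leqnn c.+1).
rewrite mulSn in h7.
move: h7 h4 h3 h5; set P := (_ * c.+1)%N; set Q := (_ * c.+1)%N.
move=> /leP h7 /leP h4 /leP h3 /leP h5; apply/leP; rewrite -?plusE in h7 h4 *; lia.
Qed.

Lemma meas_eq c t n n' N : (n' < n)%N -> ((c.*2.+1 - t) * c.+1 + n <= N.+1)%N ->
  ((c.*2.+1 - t) * c.+1 + n' <= N)%N.
Proof.
move=> h1 h2; move: h2 h1; set P := (_ * c.+1)%N; move=> /leP h2 /leP h1; apply/leP; rewrite -?plusE in h2 *; lia.
Qed.

Section Lin5.
Variables (K : fieldType) (L : unitAlgType K).
Implicit Types (S U V A B C : L -> Prop) (s t w u : seq L).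

Lemma alg_left (hdiv : division_ring L) (x : L) S d : ksubspace S -> hasd S d -> (0 < d)%N ->
  (forall z, S z -> S (x * z)) -> algebraic_over x.
Proof.
move=> HS Hd Hd0 Hx.
have [s0 [_ [Hnz [c [[i [Hi Hci]] Hsum]]]]] := alg_stab (f := fun z => x * z) HS Hd Hd0 Hx.
exists (\sum_(j < d.+1) c j *: 'X^j); split; first exact: (@poly_nz _ d.+1 c i).
rewrite horner_alg_sum.
have : (\sum_(j < d.+1) c j *: x ^+ j) * s0 = 0.
  rewrite -[RHS]Hsum mulr_suml; apply: eq_bigr => j _.
  have -> : forall k, iter k (fun z => x * z) s0 = x ^+ k * s0.
    elim=> [|k IH] /=; first by rewrite expr0 mul1r.
    by rewrite IH mulrA -exprS.
  by rewrite scalerAl.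
by move/(congr1 (fun z => z * s0^-1)); rewrite mul0r mulrK //; apply: hdiv.
Qed.

Lemma alg_right (hdiv : division_ring L) (x : L) S d : ksubspace S -> hasd S d -> (0 < d)%N ->
  (forall z, S z -> S (z * x)) -> algebraic_over x.
Proof.
move=> HS Hd Hd0 Hx.
have [s0 [_ [Hnz [c [[i [Hi Hci]] Hsum]]]]] := alg_stab (f := fun z => z * x) HS Hd Hd0 Hx.
exists (\sum_(j < d.+1) c j *: 'X^j); split; first exact: (@poly_nz _ d.+1 c i).
rewrite horner_alg_sum.
have : s0 * (\sum_(j < d.+1) c j *: x ^+ j) = 0.
  rewrite -[RHS]Hsum mulr_sumr; apply: eq_bigr => j _.
  have -> : forall k, iter k (fun z => z * x) s0 = s0 * x ^+ k.
    elim=> [|k IH] /=; first by rewrite expr0 mulr1.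
    by rewrite IH -mulrA -exprSr.
  by rewrite scalerAr.
by move/(congr1 (fun z => s0^-1 * z)); rewrite mulr0 mulKr //; apply: hdiv.
Qed.

Lemma islin_lr (a b : L) : islin (fun z => a * z * b).
Proof. by move=> k x y; rewrite mulrDr mulrDl -scalerAr -scalerAl. Qed.

Lemma bound (hdiv : division_ring L) A B C m n c :
  ksubspace A -> ksubspace B -> ksubspace C -> hasd A m -> hasd B n -> hasd C c ->
  (0 < m)%N -> (0 < n)%N -> (forall x y, A x -> B y -> C (x * y)) ->
  (m <= c)%N /\ (n <= c)%N.
Proof.
move=> HA HB HC Hm Hn Hc Hm0 Hn0 Hp.
have [a [Ha Ha0]] := hasd_nz Hm Hm0; have [b [Hb Hb0]] := hasd_nz Hn Hn0.
have Hau := hdiv _ Ha0; have Hbu := hdiv _ Hb0.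
split.
  have H1 := hasd_iso (f := fun z => z * b) (g := fun z => z * b^-1) (islin_r b)
    (mulrK Hbu) (mulrVK Hbu) Hm.
  apply: (hasd_le (ksub_pre (islin_r _) HA) H1 Hc) => z Hz.
  by have := Hp _ _ Hz Hb; rewrite mulrVK.
have H1 := hasd_iso (f := fun z => a * z) (g := fun z => a^-1 * z) (islin_l a)
  (mulKr Hau) (mulVKr Hau) Hn.
apply: (hasd_le (ksub_pre (islin_l _) HB) H1 Hc) => z Hz.
by have := Hp _ _ Ha Hz; rewrite mulVKr.
Qed.

Lemma core (hdiv : division_ring L) (htr : forall x : L, ~ in_K x -> ~ algebraic_over x) N :
  forall A B C m n c, ksubspace A -> ksubspace B -> ksubspace C ->
  hasd A m -> hasd B n -> hasd C c -> (0 < m)%N -> (0 < n)%N ->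
  (forall x y, A x -> B y -> C (x * y)) ->
  ((c.*2.+1 - (m + n)) * c.+1 + n <= N)%N -> (m + n <= c.+1)%N.
Proof.
have Halg : forall x : L, algebraic_over x -> in_K x.
  by move=> x Hx; apply: NNPP => Hn'; exact: htr x Hn' Hx.
elim: N => [|N IH] A B C m n c HA HB HC Hm Hn Hc Hm0 Hn0 Hprod Hmeas.
  by move: Hmeas; rewrite leqn0 addn_eq0 => /andP [_ /eqP Hn0']; rewrite Hn0' in Hn0.
have [Hmc Hnc] := bound hdiv HA HB HC Hm Hn Hc Hm0 Hn0 Hprod.
have Htc : (m + n <= c.*2)%N by rewrite -addnn leq_add.
have [a [Ha Ha0]] := hasd_nz Hm Hm0; have [b [Hb Hb0]] := hasd_nz Hn Hn0.
have Hau := hdiv _ Ha0; have Hbu := hdiv _ Hb0.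
pose A0 := fun z => A (a * z). pose B0 := fun z => B (z * b).
pose C0 := fun z => C (a * z * b).
have HA0 : ksubspace A0 := ksub_pre (islin_l a) HA.
have HB0 : ksubspace B0 := ksub_pre (islin_r b) HB.
have HC0 : ksubspace C0 := ksub_pre (islin_lr a b) HC.
have Hm' : hasd A0 m := hasd_iso (f := fun z => a^-1 * z) (g := fun z => a * z) (islin_l _)
  (mulVKr Hau) (mulKr Hau) Hm.
have Hn' : hasd B0 n := hasd_iso (f := fun z => z * b^-1) (g := fun z => z * b) (islin_r _)
  (mulrVK Hbu) (mulrK Hbu) Hn.
have Hc' : hasd C0 c.
  apply: (hasd_iso (f := fun z => a^-1 * z * b^-1) (islin_lr _ _)) Hc => z.
    by rewrite !mulrA mulrV // mul1r mulrVK.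
  by rewrite !mulrA mulVr // mul1r mulrK.
have Hprod0 : forall x y, A0 x -> B0 y -> C0 (x * y).
  move=> x y Hx Hy; have := Hprod _ _ Hx Hy; rewrite /C0 !mulrA //.
have H1A : A0 1 by rewrite /A0 mulr1.
have H1B : B0 1 by rewrite /B0 mul1r.
case: (classic (exists g, A0 g /\ B0 g /\ ~ in_K g)) => [[g [HgA [HgB Hng]]]|Hno].
- have Hg0 : g != 0 by apply/eqP => Hg; apply: Hng; exists 0; rewrite Hg scale0r.
  have Hgu := hdiv _ Hg0.
  pose Ag := fun z => A0 (z * g^-1). pose gB := fun z => B0 (g * z).
  have HAg : ksubspace Ag := ksub_pre (islin_r _) HA0.
  have HgB' : ksubspace gB := ksub_pre (islin_l g) HB0.
  have HmAg : hasd Ag m := hasd_iso (f := fun z => z * g) (g := fun z => z * g^-1)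
    (islin_r g) (mulrK Hgu) (mulrVK Hgu) Hm'.
  have HngB : hasd gB n := hasd_iso (f := fun z => g^-1 * z) (g := fun z => g * z)
    (islin_l _) (mulVKr Hgu) (mulKr Hgu) Hn'.
  have [a1 [a2 [Ha1 [Ha2 Haa]]]] := modular HA0 HAg Hm' HmAg.
  have [b1 [b2 [Hb1 [Hb2 Hbb]]]] := modular HB0 HgB' Hn' HngB.
  case: (leqP (m + n) (a2 + b1)) => Hcase.
  + have HA' := ksub_plus HA0 HAg; have HB' := ksub_cap HB0 HgB'.
    have Hb1pos : (0 < b1)%N.
      apply: (hasd_pos Hb1 _ (oner_neq0 L)); split => //; rewrite /gB mulr1 //.
    have Ha2pos : (0 < a2)%N.
      apply: (hasd_pos Ha2 _ (oner_neq0 L)); exists 1, 0; split => //; split; last by rewrite addr0.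
      by rewrite /Ag mul0r; apply: ksub0.
    have Hprod' : forall x y, plusS A0 Ag x -> capS B0 gB y -> C0 (x * y).
      move=> _ y [x1 [x2 [Hx1 [Hx2 ->]]]] [Hy1 Hy2]; rewrite mulrDl; apply: (ksubD HC0).
        exact: Hprod0.
      by have := Hprod0 _ _ Hx2 Hy2; rewrite mulrA mulrVK.
    have Hb1n : (b1 < n)%N.
      rewrite ltn_neqAle; apply/andP; split; last by apply: (hasd_le HB' Hb1 Hn') => v [].
      apply/eqP => Heq; rewrite Heq in Hb1; apply: Hng; apply: Halg.
      apply: (alg_left hdiv HB0 Hn' Hn0) => z Hz.
      by have [] := hasd_eq HB0 Hb1 Hn' (fun v H => proj1 H) Hz.
    have : (a2 + b1 <= c.+1)%N.
      apply: (IH _ _ _ _ _ _ HA' HB' HC0 Ha2 Hb1 Hc' Ha2pos Hb1pos Hprod').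
      move: Hcase; rewrite leq_eqVlt => /orP [/eqP <-|Hlt].
        exact: meas_eq Hb1n Hmeas.
      apply: meas_lt Htc Hlt _ Hmeas Hn0.
      exact: leq_trans (ltnW Hb1n) Hnc.
    exact: leq_trans Hcase.
  + have HA' := ksub_cap HA0 HAg; have HB' := ksub_plus HB0 HgB'.
    have Ha1pos : (0 < a1)%N.
      apply: (hasd_pos Ha1 _ Hg0); split => //; rewrite /Ag mulrV //.
    have Hb2pos : (0 < b2)%N.
      apply: (hasd_pos Hb2 _ (oner_neq0 L)); exists 1, 0; split => //; split; last by rewrite addr0.
      by rewrite /gB mulr0; apply: ksub0.
    have Hprod' : forall x y, capS A0 Ag x -> plusS B0 gB y -> C0 (x * y).
      move=> x _ [Hx1 Hx2] [y1 [y2 [Hy1 [Hy2 ->]]]]; rewrite mulrDr; apply: (ksubD HC0).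
        exact: Hprod0.
      by have := Hprod0 _ _ Hx2 Hy2; rewrite mulrA mulrVK.
    have [_ Hb2c] := bound hdiv HA' HB' HC0 Ha1 Hb2 Hc' Ha1pos Hb2pos Hprod'.
    have Hlt : (m + n < a1 + b2)%N.
      move: Haa Hbb Hcase => /eqP Haa /eqP Hbb Hcase.
      move/eqP: Haa; move/eqP: Hbb; move/leP: Hcase => Hcase Hbb Haa; apply/leP.
      rewrite -?plusE in Hcase Haa Hbb *; lia.
    have : (a1 + b2 <= c.+1)%N.
      apply: (IH _ _ _ _ _ _ HA' HB' HC0 Ha1 Hb2 Hc' Ha1pos Hb2pos Hprod').
      exact: meas_lt Htc Hlt Hb2c Hmeas Hn0.
    by move=> H; apply: leq_trans H; apply: ltnW.
- have [r [e [Hr [He Hre]]]] := modular HA0 HB0 Hm' Hn'.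
  have Hec : (e <= c)%N.
    apply: (hasd_le (ksub_plus HA0 HB0) He Hc') => _ [x [y [Hx [Hy ->]]]].
    apply: (ksubD HC0).
      by have := Hprod0 _ _ Hx H1B; rewrite mulr1.
    by have := Hprod0 _ _ H1A Hy; rewrite mul1r.
  have Hr1 : (r <= 1)%N.
    have [|u [Hu Hsz]] := @basis_exists _ _ (capS A0 B0) [:: 1] (ksub_cap HA0 HB0).
      move=> v [Hv1 Hv2].
      have [k ->] : in_K v by apply: NNPP => Hk; apply: Hno; exists v.
      by exists (fun _ => k); rewrite lcf_cons lcf_nil addr0.
    by rewrite (hasd_uniq Hr (ex_intro _ u (conj erefl Hu))).
  by rewrite -Hre -add1n leq_add.
Qed.

Lemma kspan_ksub (P : L -> Prop) : ksubspace (kspan P).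
Proof.
split; first by apply/kspanE; exists [::], (fun _ => 0); rewrite lcf_nil.
move=> a x y /kspanE [s1 [c1 [H1 ->]]] /kspanE [s2 [c2 [H2 ->]]]; apply/kspanE.
exists (s1 ++ s2), (fun i => if (i < size s1)%N then a * c1 i else c2 (i - size s1)%N).
split; first by move=> z; rewrite mem_cat => /orP [/H1|/H2].
rewrite lcf_cat -lcf_scale; congr (_ + _); apply: lcf_eq => i Hi.
  by rewrite Hi.
by rewrite ltnNge leq_addr /= addKn.
Qed.

End Lin5.
End Helpers.
Import Helpers.

Theorem mainTheorem7 (K : fieldType) (L : unitAlgType K)
  (hdiv : division_ring L)
  (htr : forall x : L, ~ in_K x -> ~ algebraic_over x)
  (A B : L -> Prop) (hA : ksubspace A) (hB : ksubspace B)
  (m n : nat) (hAd : has_kdim A m) (hBd : has_kdim B n)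
  (hm : (0 < m)%N) (hn : (0 < n)%N) :
  (exists p, has_kdim (kspan (prodset A B)) p) /\
  (forall p, has_kdim (kspan (prodset A B)) p -> (m + n - 1 <= p)%N).
Proof.
have Hm := proj1 (hasdE A m) hAd; have Hn := proj1 (hasdE B n) hBd.
have HC := kspan_ksub (prodset A B).
split.
  have [sa [_ Hba]] := Hm; have [sb [_ Hbb]] := Hn.
  have [|u [Hu _]] := @basis_exists _ _ _ [seq a * b | a <- sa, b <- sb] HC.
    move=> v /kspanE [s [c [Hs ->]]]; apply: sub_lcf; first exact: spanf_ksub.
    move=> z /Hs [x [y [Hx [Hy ->]]]].
    by apply: spanf_mul; [apply/(proj2 Hba) | apply/(proj2 Hbb)].
  by exists (size u); apply/hasdE; exists u.
move=> p /hasdE Hp.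
have Hprod : forall x y, A x -> B y -> kspan (prodset A B) (x * y).
  move=> x y Hx Hy; apply/kspanE; exists [:: x * y], (fun _ => 1); split.
    by move=> z; rewrite inE => /eqP ->; exists x, y.
  by rewrite lcf_cons lcf_nil addr0 scale1r.
have := core hdiv htr hA hB HC Hm Hn Hp hm hn Hprod (leqnn _).
by rewrite leq_subLR addnC add1n.
Qed.
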